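(* Let $C$ be a nonempty subset of a Hilbert space $H$ and let $\mathcal{S}=\{T_s:s\in S\}$ be a representation of a semigroup $S$ on $C$ by nonexpansive self-mappings. Suppose that $\{T_sc:s\in S\}$ is bounded for some $c\in C$. Let $X$ be a closed subspace of $\ell^\infty(S)$ containing the constant functions and invariant under left translations. If $X$ has a left invariant mean $\mu$ and if $y_c\in X$ for each $y\in H$, where $y_c(s)=\langle T_sc\,|\,y\rangle$ ($s\in S$), then $T_\mu c\in A_C(\mathcal{S})$; in particular $A_C(\mathcal{S})\neq\emptyset$.
   Context: A representation is a family $T_s:C\to C$ with $T_{st}=T_s\circ T_t$; nonexpansive means $\|T_sx-T_sy\|\le\|x-y\|$. $\ell^\infty(S)$ is the space of bounded complex functions on $S$ with sup norm; the left translate of $f$ by $s$ is $(\ell_sf)(t)=f(st)$. A mean on $X$ is $m\in X^*$ with $\|m\|=m(1)=1$; it is left invariant if $m(\ell_sf)=m(f)$ for all $s\in S$, $f\in X$. $T_\mu c$ denotes the unique element $a\in H$ with $\langle a\,|\,y\rangle=\mu(y_c)$ for all $y\in H$. $A_C(\mathcal{S})$ is the set of $a\in H$ with $\|a-T_sx\|\le\|a-x\|$ for all $x\in C$, $s\in S$. *)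

(* Defs.v *)
From HB Require Import structures.
From mathcomp Require Import all_boot all_order all_algebra.
From mathcomp Require Import all_classical all_reals.
From mathcomp Require Import ereal.
From mathcomp.real_closed Require Import complex.
Set Implicit Arguments. Unset Strict Implicit. Unset Printing Implicit Defensive.
Import Order.TTheory GRing.Theory Num.Theory.
Local Open Scope ring_scope.
Local Open Scope classical_set_scope.

(* Inner products are linear in the FIRST argument, conjugate-linear in the
   second (as in the paper: <a|y> = mu(y_c) with y_c(s) = <T_s c | y>). *)

Section Defs.
Variable R : realType.
Local Notation C := R[i].
Definition cmod (z : C) : R := ComplexField.Normc.normc z.

Definition hnorm (H : lmodType C) (ip : H -> H -> C) (x : H) : R :=
  Num.sqrt (complex.Re (ip x x)).

Definition is_hilbert (H : lmodType C) (ip : H -> H -> C) : Prop :=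
  [/\ (forall (a : C) (x y z : H), ip (a *: x + y) z = a * ip x z + ip y z),
      (forall x y : H, ip y x = conjc (ip x y)),
      (forall x : H, 0 <= ip x x),
      (forall x : H, ip x x = 0 -> x = 0)
    & (forall u : nat -> H,
        (forall e : R, 0 < e -> exists N : nat, forall m n : nat,
            (N <= m)%N -> (N <= n)%N -> hnorm ip (u m - u n) <= e) ->
        exists l : H, forall e : R, 0 < e -> exists N : nat, forall n : nat,
            (N <= n)%N -> hnorm ip (u n - l) <= e)].

Definition is_semigroup (S : Type) (op : S -> S -> S) : Prop :=
  forall s t u : S, op s (op t u) = op (op s t) u.

(* T = {T_s : s in S} is a representation of (S, op) on C by self-mappings
   of C (the maps are total functions H -> H; only their restriction to C
   matters). *)
Definition is_representation (H : Type) (S : Type) (op : S -> S -> S)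
    (Cs : set H) (T : S -> H -> H) : Prop :=
  (forall s x, Cs x -> Cs (T s x)) /\
  (forall s t x, Cs x -> T (op s t) x = T s (T t x)).

Definition nonexpansive_rep (H : lmodType C) (ip : H -> H -> C) (S : Type)
    (Cs : set H) (T : S -> H -> H) : Prop :=
  forall s x y, Cs x -> Cs y -> hnorm ip (T s x - T s y) <= hnorm ip (x - y).

Definition bounded_fun (S : Type) (f : S -> C) : Prop :=
  exists M : R, forall s, cmod (f s) <= M.

Definition supnorm (S : Type) (f : S -> C) : \bar R :=
  ereal_sup [set (cmod (f s))%:E | s in [set: S]].

Definition ltrans (S : Type) (op : S -> S -> S) (s : S) (f : S -> C) : S -> C :=
  fun t => f (op s t).

Definition cst_fun (S : Type) (a : C) : S -> C := fun _ => a.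

Definition admissible_subspace (S : Type) (op : S -> S -> S)
    (X : set (S -> C)) : Prop :=
  [/\ (forall f : S -> C, X f -> bounded_fun f),
      (forall (a : C) f g, X f -> X g -> X (fun s => a * f s + g s)),
      (forall f : S -> C, bounded_fun f ->
          (forall e : R, 0 < e -> exists g, X g /\ (supnorm (fun s => (f s - g s)%R) < e%:E)%E) ->
          X f),
      (forall a : C, X (@cst_fun S a))
    & (forall s f, X f -> X (ltrans op s f))].

Definition opnorm (S : Type) (X : set (S -> C)) (mu : (S -> C) -> C) : \bar R :=
  ereal_sup [set (cmod (mu f))%:E | f in [set f | X f /\ (supnorm f <= 1%:E)%E]].

Definition is_mean (S : Type) (X : set (S -> C)) (mu : (S -> C) -> C) : Prop :=
  [/\ (forall (a : C) f g, X f -> X g ->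
         mu (fun s => a * f s + g s) = a * mu f + mu g),
      opnorm X mu = 1%:E
    & mu (@cst_fun S 1) = 1].

Definition left_invariant (S : Type) (op : S -> S -> S) (X : set (S -> C))
    (mu : (S -> C) -> C) : Prop :=
  forall s f, X f -> mu (ltrans op s f) = mu f.

Definition yc (H : lmodType C) (ip : H -> H -> C) (S : Type) (T : S -> H -> H)
    (c y : H) : S -> C := fun s => ip (T s c) y.

(* T_mu c = a  iff  <a|y> = mu(y_c) for all y *)
Definition is_Tmu (H : lmodType C) (ip : H -> H -> C) (S : Type) (T : S -> H -> H)
    (mu : (S -> C) -> C) (c a : H) : Prop :=
  forall y : H, ip a y = mu (yc ip T c y).

Definition A_C (H : lmodType C) (ip : H -> H -> C) (S : Type)
    (Cs : set H) (T : S -> H -> H) : set H :=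
  [set a | forall x s, Cs x -> hnorm ip (a - T s x) <= hnorm ip (a - x)].

End Defs.

(* Main.v *)
Require Import Defs.
From HB Require Import structures.
From mathcomp Require Import all_boot all_order all_algebra.
From mathcomp Require Import all_classical all_reals.
From mathcomp Require Import ereal.
From mathcomp.real_closed Require Import complex.
From mathcomp Require Import ring lra.
Import Order.TTheory GRing.Theory Num.Theory.
Local Open Scope ring_scope.
Local Open Scope classical_set_scope.
Set Implicit Arguments. Unset Strict Implicit. Unset Printing Implicit Defensive.
Lemma cReD (R : realType) (x y : R[i]) : complex.Re (x + y) = complex.Re x + complex.Re y.
Proof. by case: x; case: y. Qed.
Lemma cReN (R : realType) (x : R[i]) : complex.Re (- x) = - complex.Re x.
Proof. by case: x. Qed.
Lemma cImN (R : realType) (x : R[i]) : complex.Im (- x) = - complex.Im x.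
Proof. by case: x. Qed.
Lemma cReB (R : realType) (x y : R[i]) : complex.Re (x - y) = complex.Re x - complex.Re y.
Proof. by rewrite cReD cReN. Qed.
Lemma cImD (R : realType) (x y : R[i]) : complex.Im (x + y) = complex.Im x + complex.Im y.
Proof. by case: x; case: y. Qed.
Lemma cReconj (R : realType) (x : R[i]) : complex.Re (conjc x) = complex.Re x.
Proof. by case: x. Qed.
Lemma cReZ (R : realType) (r : R) (x : R[i]) : complex.Re (r%:C%C * x) = r * complex.Re x.
Proof. by case: x => a b /=; rewrite mul0r subr0. Qed.
Lemma cImZ (R : realType) (r : R) (x : R[i]) : complex.Im (r%:C%C * x) = r * complex.Im x.
Proof. by case: x => a b /=; rewrite mul0r addr0. Qed.
Lemma conjc_real' (R : realType) (r : R) : conjc (r%:C%C) = r%:C%C.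
Proof. by rewrite /= oppr0. Qed.
Lemma conjcD' (R : realType) (x y : R[i]) : conjc (x + y) = conjc x + conjc y.
Proof. by case: x => a b; case: y => c d /=; rewrite opprD. Qed.
Lemma conjcM' (R : realType) (x y : R[i]) : conjc (x * y) = conjc x * conjc y.
Proof. exact: rmorphM. Qed.
Lemma conjcK' (R : realType) (x : R[i]) : conjc (conjc x) = x.
Proof. by case: x => a b /=; rewrite opprK. Qed.
Lemma cRe_iM (R : realType) (x : R[i]) : complex.Re ((- 'i)%C * x) = complex.Im x.
Proof. by case: x => a b /=; lra. Qed.
Lemma complex_eqRI (R : realType) (x y : R[i]) :
  complex.Re x = complex.Re y -> complex.Im x = complex.Im y -> x = y.
Proof. by case: x => a b; case: y => c d /= -> ->. Qed.

Lemma conjc_i (R : realType) : conjc ('i%C : R[i]) = - 'i%C.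
Proof. by apply: complex_eqRI => /=; rewrite ?oppr0. Qed.

Definition Pr (R : realType) (H : lmodType R[i]) (ip : H -> H -> R[i]) (x y : H) : R :=
  complex.Re (ip x y).
Definition Nr (R : realType) (H : lmodType R[i]) (ip : H -> H -> R[i]) (x : H) : R :=
  Pr ip x x.

Lemma ip0l (R : realType) (H : lmodType R[i]) (ip : H -> H -> R[i]) :
  is_hilbert ip -> forall z, ip 0 z = 0.
Proof.
case=> lin _ _ _ _ z; have := lin 1 0 0 z.
rewrite scaler0 addr0 mul1r => h.
by apply: (@addrI _ (ip 0 z)); rewrite addr0 -h.
Qed.

Lemma ipDl (R : realType) (H : lmodType R[i]) (ip : H -> H -> R[i]) :
  is_hilbert ip -> forall x y z, ip (x + y) z = ip x z + ip y z.
Proof. by case=> lin _ _ _ _ x y z; have := lin 1 x y z; rewrite scale1r mul1r. Qed.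

Lemma ipZl (R : realType) (H : lmodType R[i]) (ip : H -> H -> R[i]) :
  is_hilbert ip -> forall a x z, ip (a *: x) z = a * ip x z.
Proof.
move=> hip a x z; have := hip; case=> lin _ _ _ _.
by have := lin a x 0 z; rewrite addr0 (ip0l hip) addr0.
Qed.

Lemma ipNl (R : realType) (H : lmodType R[i]) (ip : H -> H -> R[i]) :
  is_hilbert ip -> forall x z, ip (- x) z = - ip x z.
Proof. by move=> hip x z; rewrite -scaleN1r (ipZl hip) mulN1r. Qed.

Lemma ipsym (R : realType) (H : lmodType R[i]) (ip : H -> H -> R[i]) :
  is_hilbert ip -> forall x y, ip y x = conjc (ip x y).
Proof. by case. Qed.

Lemma ipDr (R : realType) (H : lmodType R[i]) (ip : H -> H -> R[i]) :
  is_hilbert ip -> forall x y z, ip z (x + y) = ip z x + ip z y.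
Proof.
move=> hip x y z; rewrite (ipsym hip) (ipDl hip) conjcD' -!(ipsym hip) //.
Qed.

Lemma ipZr (R : realType) (H : lmodType R[i]) (ip : H -> H -> R[i]) :
  is_hilbert ip -> forall a x z, ip z (a *: x) = conjc a * ip z x.
Proof.
move=> hip a x z; rewrite (ipsym hip) (ipZl hip) conjcM' -(ipsym hip) //.
Qed.

Lemma ipNr (R : realType) (H : lmodType R[i]) (ip : H -> H -> R[i]) :
  is_hilbert ip -> forall x z, ip z (- x) = - ip z x.
Proof.
move=> hip x z; rewrite -scaleN1r (ipZr hip).
have -> : conjc (-1 : R[i]) = -1 by rewrite /= oppr0.
by rewrite mulN1r.
Qed.

Lemma PrDl (R : realType) (H : lmodType R[i]) (ip : H -> H -> R[i]) :
  is_hilbert ip -> forall x y z, Pr ip (x + y) z = Pr ip x z + Pr ip y z.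
Proof. by move=> hip x y z; rewrite /Pr (ipDl hip) cReD. Qed.
Lemma PrDr (R : realType) (H : lmodType R[i]) (ip : H -> H -> R[i]) :
  is_hilbert ip -> forall x y z, Pr ip z (x + y) = Pr ip z x + Pr ip z y.
Proof. by move=> hip x y z; rewrite /Pr (ipDr hip) cReD. Qed.
Lemma PrNl (R : realType) (H : lmodType R[i]) (ip : H -> H -> R[i]) :
  is_hilbert ip -> forall x z, Pr ip (- x) z = - Pr ip x z.
Proof. by move=> hip x z; rewrite /Pr (ipNl hip) cReN. Qed.
Lemma PrNr (R : realType) (H : lmodType R[i]) (ip : H -> H -> R[i]) :
  is_hilbert ip -> forall x z, Pr ip z (- x) = - Pr ip z x.
Proof. by move=> hip x z; rewrite /Pr (ipNr hip) cReN. Qed.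
Lemma PrBl (R : realType) (H : lmodType R[i]) (ip : H -> H -> R[i]) :
  is_hilbert ip -> forall x y z, Pr ip (x - y) z = Pr ip x z - Pr ip y z.
Proof. by move=> hip x y z; rewrite (PrDl hip) (PrNl hip). Qed.
Lemma PrBr (R : realType) (H : lmodType R[i]) (ip : H -> H -> R[i]) :
  is_hilbert ip -> forall x y z, Pr ip z (x - y) = Pr ip z x - Pr ip z y.
Proof. by move=> hip x y z; rewrite (PrDr hip) (PrNr hip). Qed.
Lemma Prsym (R : realType) (H : lmodType R[i]) (ip : H -> H -> R[i]) :
  is_hilbert ip -> forall x y, Pr ip y x = Pr ip x y.
Proof. by move=> hip x y; rewrite /Pr (ipsym hip) cReconj. Qed.
Lemma PrZl (R : realType) (H : lmodType R[i]) (ip : H -> H -> R[i]) :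
  is_hilbert ip -> forall (r : R) x z, Pr ip (r%:C%C *: x) z = r * Pr ip x z.
Proof. by move=> hip r x z; rewrite /Pr (ipZl hip) cReZ. Qed.
Lemma PrZr (R : realType) (H : lmodType R[i]) (ip : H -> H -> R[i]) :
  is_hilbert ip -> forall (r : R) x z, Pr ip z (r%:C%C *: x) = r * Pr ip z x.
Proof. by move=> hip r x z; rewrite /Pr (ipZr hip) conjc_real' cReZ. Qed.
Lemma Pr0r (R : realType) (H : lmodType R[i]) (ip : H -> H -> R[i]) :
  is_hilbert ip -> forall z, Pr ip z 0 = 0.
Proof. by move=> hip z; rewrite (Prsym hip) /Pr (ip0l hip). Qed.

Lemma Nr_ge0 (R : realType) (H : lmodType R[i]) (ip : H -> H -> R[i]) :
  is_hilbert ip -> forall x, 0 <= Nr ip x.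
Proof. by case=> _ _ pos _ _ x; have := pos x; rewrite lecE => /andP[]. Qed.

Lemma Nr_eq0 (R : realType) (H : lmodType R[i]) (ip : H -> H -> R[i]) :
  is_hilbert ip -> forall x, Nr ip x = 0 -> x = 0.
Proof.
case=> _ _ pos def _ x h; apply: def; apply: complex_eqRI => //.
by have := pos x; rewrite lecE => /andP[/eqP -> _].
Qed.

Lemma NrD (R : realType) (H : lmodType R[i]) (ip : H -> H -> R[i]) :
  is_hilbert ip -> forall x y, Nr ip (x + y) = Nr ip x + 2 * Pr ip x y + Nr ip y.
Proof.
move=> hip x y; rewrite /Nr (PrDl hip) !(PrDr hip) (Prsym hip y x); lra.
Qed.
Lemma NrB (R : realType) (H : lmodType R[i]) (ip : H -> H -> R[i]) :
  is_hilbert ip -> forall x y, Nr ip (x - y) = Nr ip x - 2 * Pr ip x y + Nr ip y.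
Proof.
move=> hip x y; rewrite (NrD hip) /Nr (PrNr hip) (PrNl hip) (PrNr hip); lra.
Qed.
Lemma NrN (R : realType) (H : lmodType R[i]) (ip : H -> H -> R[i]) :
  is_hilbert ip -> forall x, Nr ip (- x) = Nr ip x.
Proof. by move=> hip x; rewrite /Nr (PrNr hip) (PrNl hip) opprK. Qed.
Lemma NrZ (R : realType) (H : lmodType R[i]) (ip : H -> H -> R[i]) :
  is_hilbert ip -> forall (r : R) x, Nr ip (r%:C%C *: x) = r ^+ 2 * Nr ip x.
Proof. by move=> hip r x; rewrite /Nr (PrZl hip) (PrZr hip) mulrA expr2. Qed.

Lemma hnorm_sq (R : realType) (H : lmodType R[i]) (ip : H -> H -> R[i]) :
  is_hilbert ip -> forall x, hnorm ip x ^+ 2 = Nr ip x.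
Proof. by move=> hip x; rewrite /hnorm sqr_sqrtr //; apply: (Nr_ge0 hip). Qed.
Lemma hnorm_ge0 (R : realType) (H : lmodType R[i]) (ip : H -> H -> R[i]) :
  forall x, 0 <= hnorm ip x.
Proof. by move=> x; rewrite /hnorm sqrtr_ge0. Qed.

Lemma CS2 (R : realType) (H : lmodType R[i]) (ip : H -> H -> R[i]) :
  is_hilbert ip -> forall x y, Pr ip x y ^+ 2 <= Nr ip x * Nr ip y.
Proof.
move=> hip x y.
have [Ny0|Nyp] := eqVneq (Nr ip y) 0.
  by rewrite Ny0 (Nr_eq0 hip Ny0) (Pr0r hip) expr0n /= mulr0.
have Nyg : 0 < Nr ip y by rewrite lt0r Nyp (Nr_ge0 hip).
have := Nr_ge0 hip ((Nr ip y)%:C%C *: x - (Pr ip x y)%:C%C *: y).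
rewrite (NrB hip) !(NrZ hip) (PrZl hip) (PrZr hip) => h.
have : 0 <= Nr ip y * (Nr ip x * Nr ip y - Pr ip x y ^+ 2) by nra.
by rewrite pmulr_rge0 // subr_ge0.
Qed.

Lemma CS (R : realType) (H : lmodType R[i]) (ip : H -> H -> R[i]) :
  is_hilbert ip -> forall x y, Pr ip x y <= hnorm ip x * hnorm ip y.
Proof.
move=> hip x y; rewrite /hnorm -sqrtrM ?(Nr_ge0 hip) //.
apply: (le_trans (ler_norm _)); rewrite -sqrtr_sqr.
by rewrite ler_sqrt ?(CS2 hip) // mulr_ge0 // (Nr_ge0 hip).
Qed.
Lemma cmodE (R : realType) (z : R[i]) :
  cmod z = Num.sqrt (complex.Re z ^+ 2 + complex.Im z ^+ 2).
Proof. by case: z. Qed.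

Lemma cmod_le1 (R : realType) (z : R[i]) :
  complex.Re z ^+ 2 + complex.Im z ^+ 2 <= 1 -> cmod z <= 1.
Proof. by move=> h; rewrite cmodE -sqrtr1 ler_sqrt. Qed.

Lemma cmod_sq (R : realType) (z : R[i]) :
  cmod z ^+ 2 = complex.Re z ^+ 2 + complex.Im z ^+ 2.
Proof. by rewrite cmodE sqr_sqrtr // addr_ge0 // sqr_ge0. Qed.

Lemma cmod_ge0 (R : realType) (z : R[i]) : 0 <= cmod z.
Proof. by rewrite cmodE sqrtr_ge0. Qed.

Lemma mu_lin (R : realType) (S : Type) (X : set (S -> R[i])) mu :
  is_mean X mu -> forall a f g, X f -> X g ->
  mu (fun s => a * f s + g s) = a * mu f + mu g.
Proof. by case. Qed.

Lemma mu_cst0 (R : realType) (S : Type) (op : S -> S -> S) (X : set (S -> R[i])) mu :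
  admissible_subspace op X -> is_mean X mu -> mu (@cst_fun R S 0) = 0.
Proof.
move=> hX hmu; have [_ _ _ Xc _] := hX.
have := mu_lin hmu 1 (Xc 0) (Xc 0).
have -> : (fun s => 1 * @cst_fun R S 0 s + @cst_fun R S 0 s) = @cst_fun R S 0.
  by apply: funext => s; rewrite /cst_fun mul1r addr0.
rewrite mul1r => h.
by apply: (@addrI _ (mu (@cst_fun R S 0))); rewrite addr0 -h.
Qed.

Lemma mu_cst (R : realType) (S : Type) (op : S -> S -> S) (X : set (S -> R[i])) mu :
  admissible_subspace op X -> is_mean X mu -> forall a, mu (@cst_fun R S a) = a.
Proof.
move=> hX hmu a; have [_ _ _ Xc _] := hX.
have := mu_lin hmu a (Xc 1) (Xc 0).
have -> : (fun s => a * @cst_fun R S 1 s + @cst_fun R S 0 s) = @cst_fun R S a.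
  by apply: funext => s; rewrite /cst_fun mulr1 addr0.
by rewrite (mu_cst0 hX hmu) addr0; case: hmu => _ _ ->; rewrite mulr1.
Qed.

Lemma mu_bound1 (R : realType) (S : Type) (X : set (S -> R[i])) mu :
  is_mean X mu -> forall f, X f -> (forall s, cmod (f s) <= 1) -> cmod (mu f) <= 1.
Proof.
case=> _ hn _ f Xf hf.
have : ((cmod (mu f))%:E <= opnorm X mu)%E.
  apply: ereal_sup_ubound; exists f => //; split => //.
  by apply: ge_ereal_sup => _ [s _ <-]; rewrite lee_fin.
by rewrite hn lee_fin.
Qed.

Lemma mu_pos (R : realType) (S : Type) (op : S -> S -> S) (X : set (S -> R[i])) mu :
  admissible_subspace op X -> is_mean X mu ->
  forall f (A : R), X f -> (forall s, complex.Re (f s) <= A) -> complex.Re (mu f) <= A.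
Proof.
move=> hX hmu f A Xf hA; have [Xb _ _ Xc _] := hX.
have [L0 hL0] := Xb f Xf.
set L : R := `|L0|.
have hL : forall s, complex.Re (f s) ^+ 2 + complex.Im (f s) ^+ 2 <= L ^+ 2.
  move=> s; rewrite -cmod_sq; have c0 := cmod_ge0 (f s).
  have c1 : cmod (f s) <= L := le_trans (hL0 s) (ler_norm _).
  nra.
have L0le : 0 <= L by rewrite /L normr_ge0.
rewrite leNgt; apply/negP => hD.
set D : R := complex.Re (mu f) - A.
have Dp : 0 < D by rewrite subr_gt0.
set r : R := L + `|A| + L ^+ 2 / D + 1.
have rD : r * D = (L + `|A| + 1) * D + L ^+ 2.
  rewrite /r; field; exact: lt0r_neq0.
have hr : L + `|A| <= r.
  rewrite /r -addrA lerDl addr_ge0 // divr_ge0 ?sqr_ge0 //; exact: ltW.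
set rho : R := Num.sqrt (r ^+ 2 + L ^+ 2).
have rhop : 0 < rho.
  rewrite sqrtr_gt0; have : 0 < r.
    rewrite /r; have := normr_ge0 A; have : 0 <= L^+2/D := divr_ge0 (sqr_ge0 L) (ltW Dp).
    lra.
  by move=> rp; rewrite ltr_wpDr ?sqr_ge0 // exprn_gt0.
have rho2 : rho ^+ 2 = r ^+ 2 + L ^+ 2 by rewrite sqr_sqrtr // addr_ge0 ?sqr_ge0.
set k : R := rho^-1.
set b : R := - (A - r) * k.
have Xg := Xc (b%:C%C).
have hlin := mu_lin hmu (k%:C%C) Xf Xg.
have hb := mu_bound1 hmu.
have Xkg := (let: And5 _ Xl _ _ _ := hX in Xl) (k%:C%C) f (@cst_fun R S (b%:C%C)) Xf Xg.
have krho : k * rho = 1 by rewrite /k mulVf // gt_eqF.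
have kp : 0 < k by rewrite /k invr_gt0.
have hg : forall s, cmod (k%:C%C * f s + @cst_fun R S (b%:C%C) s) <= 1.
  move=> s; apply: cmod_le1; rewrite /cst_fun cReD cImD cReZ cImZ /= addr0.
  have h1 := hL s; have h2 := hA s.
  set x := complex.Re (f s) in h1 h2 *; set y := complex.Im (f s) in h1 *.
  have xL : - L <= x by nra.
  have e1 : (x - A + r) ^+ 2 <= r ^+ 2.
    have := normr_ge0 A; have := ler_norm A; have := ler_normr A A; nra.
  have -> : (k * x + b) ^+ 2 + (k * y) ^+ 2 = k ^+ 2 * ((x - A + r) ^+ 2 + y ^+ 2).
    by rewrite /b; ring.
  have -> : 1 = k ^+ 2 * rho ^+ 2 by rewrite -exprMn krho expr1n.
  rewrite ler_pM2l ?exprn_gt0 // rho2; have : y ^+ 2 <= L ^+ 2 by nra.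
  lra.
have := hb _ Xkg hg.
rewrite hlin (mu_cst hX hmu) => hm.
have : complex.Re (k%:C%C * mu f + b%:C%C) ^+ 2 <= 1.
  have := cmod_sq (k%:C%C * mu f + b%:C%C); have := cmod_ge0 (k%:C%C * mu f + b%:C%C).
  have := sqr_ge0 (complex.Im (k%:C%C * mu f + b%:C%C)); nra.
rewrite cReD cReZ /= /b.
have -> : k * complex.Re (mu f) + - (A - r) * k = k * (D + r) by rewrite /D; ring.
have -> : (1 : R) = k ^+ 2 * rho ^+ 2 by rewrite -exprMn krho expr1n.
rewrite exprMn ler_pM2l ?exprn_gt0 // rho2 => h.
have : 0 <= (L + `|A|) * D.
  by apply: mulr_ge0; [apply: addr_ge0 => //; exact: normr_ge0 | exact: ltW].
nra.
Qed.
Lemma invS_le (R : realType) (N n : nat) : (N <= n)%N ->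
  ((n.+1)%:R : R)^-1 <= ((N.+1)%:R)^-1.
Proof. by move=> h; rewrite lef_pV2 ?posrE ?ltr0Sn // ler_nat ltnS. Qed.

Lemma invS_gt0 (R : realType) (n : nat) : 0 < ((n.+1)%:R : R)^-1.
Proof. by rewrite invr_gt0 ltr0Sn. Qed.

Lemma small_inv (R : realType) (e : R) : 0 < e ->
  exists N : nat, forall n, (N <= n)%N -> ((n.+1)%:R : R)^-1 <= e.
Proof.
move=> ep; exists (Num.trunc (e^-1)) => n hn.
apply: (le_trans (invS_le R hn)); apply: ltW.
have := truncnS_gt (e^-1).
by rewrite -[X in _ -> _ < X](invrK e) ltf_pV2 ?posrE ?ltr0Sn ?invr_gt0.
Qed.

Lemma hnormE (R : realType) (H : lmodType R[i]) (ip : H -> H -> R[i]) x :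
  hnorm ip x = Num.sqrt (Nr ip x).
Proof. by []. Qed.

Lemma hnormN (R : realType) (H : lmodType R[i]) (ip : H -> H -> R[i]) :
  is_hilbert ip -> forall x, hnorm ip (- x) = hnorm ip x.
Proof. by move=> hip x; rewrite !hnormE (NrN hip). Qed.

Lemma hnorm_le (R : realType) (H : lmodType R[i]) (ip : H -> H -> R[i]) :
  is_hilbert ip -> forall x (e : R), 0 <= e -> Nr ip x <= e ^+ 2 -> hnorm ip x <= e.
Proof.
by move=> hip x e e0 h; rewrite hnormE -(ger0_norm e0) -sqrtr_sqr ler_sqrt // sqr_ge0.
Qed.

Lemma realC_N1 (R : realType) : ((-1 : R)%:C)%C = -1 :> R[i].
Proof. by apply: complex_eqRI => //=; rewrite oppr0. Qed.

Lemma riesz_real (R : realType) (H : lmodType R[i]) (ip : H -> H -> R[i])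
  (Lf : H -> R) (K : R) :
  is_hilbert ip -> 0 <= K ->
  (forall x y, Lf (x + y) = Lf x + Lf y) ->
  (forall (r : R) x, Lf (r%:C%C *: x) = r * Lf x) ->
  (forall x, Lf x <= K * hnorm ip x) ->
  exists a, forall w, Pr ip a w = Lf w.
Proof.
move=> hip K0 LD LZ Lb.
have LN : forall x, Lf (- x) = - Lf x.
  by move=> x; rewrite -scaleN1r -realC_N1 LZ mulN1r.
have Lb' : forall x, - Lf x <= K * hnorm ip x.
  by move=> x; rewrite -LN -(hnormN hip); apply: Lb.
have LB : forall x y, Lf (x - y) = Lf x - Lf y by move=> x y; rewrite LD LN.
pose J x := Nr ip x - 2 * Lf x.
have Jlb : forall x, - K ^+ 2 <= J x.
  move=> x; rewrite /J -(hnorm_sq hip); have := Lb x; have := sqr_ge0 (hnorm ip x - K); nra.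
pose E := [set - J z | z in [set: H]].
have hE : has_sup E.
  split; first by exists (- J 0); exists 0.
  by exists (K ^+ 2) => _ [z _ <-]; rewrite lerNl.
set m := sup E.
have Jm : forall z, - m <= J z.
  by move=> z; rewrite lerNl; apply: sup_upper_bound => //; exists z.
have /choice [zs hzs] : forall n : nat, exists z, J z < - m + ((n.+1)%:R)^-1.
  move=> n; have [_ [z _ <-]] := sup_adherent (invS_gt0 R n) hE.
  by exists z; move: q; rewrite -ltrN2 opprK opprB addrC.
(* parallelogram *)
have para : forall u v, Nr ip (u - v) <= 2 * (J u + J v) + 4 * m.
  move=> u v; pose c := (2^-1 : R).
  have := Jm (c%:C%C *: (u + v)).
  rewrite /J (NrZ hip) LZ LD (NrD hip) (NrB hip).
  have hc : c * 2 = 1 by rewrite /c mulVf.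
  have hc2 : c ^+ 2 * 4 = 1.
    by rewrite /c; field.
  nra.
have cauchy : forall e : R, 0 < e -> exists N : nat, forall p q : nat,
    (N <= p)%N -> (N <= q)%N -> hnorm ip (zs p - zs q) <= e.
  move=> e ep.
  have e4 : 0 < e ^+ 2 / 4 by rewrite divr_gt0 // exprn_gt0.
  have [N hN] := small_inv e4.
  exists N => p q hp hq; apply: (hnorm_le hip (ltW ep)).
  have := para (zs p) (zs q); have := hzs p; have := hzs q.
  move: (hN p hp) (hN q hq) => h1 h2.
  have -> : e ^+ 2 = 4 * (e ^+ 2 / 4) by field.
  move=> A B C; apply: (le_trans C).
  set u := e ^+ 2 / 4 in h1 h2 *.
  set a1 := J (zs p) in A B C *. set a2 := J (zs q) in A B C *.
  set v1 := p.+1%:R^-1 in h1 B. set v2 := q.+1%:R^-1 in h2 A.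
  clearbody J m. lra.
have [a hconv] : exists a, forall e : R, 0 < e -> exists N : nat, forall n : nat,
    (N <= n)%N -> hnorm ip (zs n - a) <= e.
  by case: hip => _ _ _ _; apply.
have Ja : J a <= - m.
  rewrite leNgt; apply/negP => hd.
  set d := J a + m.
  have dp : 0 < d by rewrite /d; lra.
  set ha := hnorm ip a.
  have ha0 : 0 <= ha := hnorm_ge0 ip a.
  set e := d / (4 * (ha + K) + 4).
  have ep : 0 < e by rewrite /e divr_gt0 //; lra.
  have [N1 hN1] := hconv e ep.
  have [N2 hN2] := small_inv (divr_gt0 dp (ltr0Sn R 1)).
  set n := maxn N1 N2.
  have h1 := hN1 n (leq_maxl _ _).
  have h2 := hN2 n (leq_maxr _ _).
  have h3 := hzs n.
  set z := zs n in h1 h3.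
  have key : J a - J z <= 2 * (ha + K) * hnorm ip (a - z).
    have ez : z = a - (a - z) by rewrite opprB addrC subrK.
    have hP := CS hip a (a - z).
    have hL := Lb' (a - z).
    have hN0 := Nr_ge0 hip (a - z).
    rewrite /J; have -> : Nr ip z = Nr ip (a - (a - z)) by rewrite -ez.
    rewrite (NrB hip); rewrite LB in hL.
    rewrite -/ha in hP; lra.
  have hz : hnorm ip (a - z) <= e by rewrite -(hnormN hip) opprB.
  have : 2 * (ha + K) * hnorm ip (a - z) <= d / 2.
    apply: (le_trans (y := 2 * (ha + K) * e)).
      by rewrite ler_wpM2l // mulr_ge0 //; lra.
    rewrite /e; rewrite mulrA ler_pdivrMr; last by lra.
    have -> : d / 2 * (4 * (ha + K) + 4) = 2 * (ha + K) * d + 2 * d by field.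
    lra.
  move: h2 h3 key => h2 h3 key hh.
  have dd : d = J a + m by [].
  set u := n.+1%:R^-1 in h2 h3.
  clearbody d e z ha J m n u.
  have t1 : J a <= J z + d / 2 by lra.
  have t2 : J z < - m + d / 2 by lra.
  have t3 : d / 2 + d / 2 = d by field.
  lra.
exists a => w.
have key : forall t : R, 0 <= 2 * t * (Pr ip a w - Lf w) + t ^+ 2 * Nr ip w.
  move=> t; have := Jm (a + t%:C%C *: w).
  rewrite /J (NrD hip) (NrZ hip) (PrZr hip) LD LZ.
  move: Ja; rewrite /J.
  set A1 := Nr ip a; set A2 := Lf a; set A3 := Pr ip a w; set A4 := Lf w.
  set A5 := t ^+ 2 * Nr ip w. clearbody m A1 A2 A3 A4 A5. move=> *. nra.
set q := Pr ip a w - Lf w in key *.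
set s := Nr ip w + 1.
have hs : 0 < s by rewrite /s; have := Nr_ge0 hip w; lra.
have := key (- q / s).
have -> : 2 * (- q / s) * q + (- q / s) ^+ 2 * Nr ip w = - (q ^+ 2 * (Nr ip w + 2)) / s ^+ 2.
  by rewrite /s; field; rewrite gt_eqF.
rewrite ler_pdivlMr ?exprn_gt0 // mul0r oppr_ge0 => hq.
have hq2 : q ^+ 2 <= 0.
  have h2 : 0 < Nr ip w + 2 by have := Nr_ge0 hip w; lra.
  by rewrite -(pmulr_lle0 _ h2).
have q0 : q = 0 by apply/eqP; rewrite -sqrf_eq0 eq_le hq2 sqr_ge0.
by move: q0; rewrite /q => /eqP; rewrite subr_eq0 => /eqP.
Qed.
Fixpoint Gsum (R : realType) (S : Type) (op : S -> S -> S) (s : S) (g : S -> R[i])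
  (n : nat) : S -> R[i] :=
  match n with
  | 0 => fun _ => 0
  | k.+1 => fun t => 1 * g (iter k (op s) t) + Gsum op s g k t
  end.

Lemma Xlin (R : realType) (S : Type) (op : S -> S -> S) (X : set (S -> R[i])) :
  admissible_subspace op X -> forall a f g, X f -> X g -> X (fun s => a * f s + g s).
Proof. by case. Qed.

Lemma iter_trans (R : realType) (S : Type) (op : S -> S -> S) (X : set (S -> R[i])) mu
  (s : S) (g : S -> R[i]) :
  admissible_subspace op X -> left_invariant op X mu -> X g ->
  forall k, X (fun t => g (iter k (op s) t)) /\ mu (fun t => g (iter k (op s) t)) = mu g.
Proof.
move=> hX hinv Xg; elim=> [|k [IH1 IH2]] /=; first by split.
have -> : (fun t => g (op s (iter k (op s) t))) = ltrans op s (fun t => g (iter k (op s) t)).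
  by apply: funext => t; rewrite /ltrans -iterSr.
split; first by case: hX => _ _ _ _; apply.
by rewrite hinv.
Qed.

Lemma Gsum_prop (R : realType) (S : Type) (op : S -> S -> S) (X : set (S -> R[i])) mu
  (s : S) (g : S -> R[i]) :
  admissible_subspace op X -> is_mean X mu -> left_invariant op X mu -> X g ->
  forall n, X (Gsum op s g n) /\ mu (Gsum op s g n) = n%:R * mu g.
Proof.
move=> hX hmu hinv Xg; elim=> [|n [IH1 IH2]] /=.
  have -> : (fun _ : S => 0 : R[i]) = @cst_fun R S 0 by [].
  by split; [case: hX | rewrite mul0r (mu_cst0 hX hmu)].
have [X1 m1] := iter_trans s hX hinv Xg n.
split; first exact: (Xlin hX 1 X1 IH1).
rewrite (mu_lin hmu 1 X1 IH1) m1 IH2 mul1r -nat1r mulrDl mul1r //.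
Qed.

Lemma Gsum_bound (R : realType) (S : Type) (op : S -> S -> S) (s : S) (g : S -> R[i])
  (E0 : R) (e : S -> R) :
  (forall t, complex.Re (g t) <= E0 + e t - e (op s t)) ->
  forall n t, complex.Re (Gsum op s g n t) <= n%:R * E0 + e t - e (iter n (op s) t).
Proof.
move=> hg; elim=> [|n IH] t /=; first by rewrite mul0r add0r subrr.
rewrite cReD mul1r; have := hg (iter n (op s) t); have := IH t.
set u := e (iter n (op s) t); set v := e (op s (iter n (op s) t)).
rewrite -nat1r; set w := complex.Re (Gsum op s g n t). lra.
Qed.

Lemma Re_natM (R : realType) (n : nat) (z : R[i]) :
  complex.Re (n%:R * z) = n%:R * complex.Re z.
Proof.
have -> : (n%:R : R[i]) = ((n%:R : R)%:C)%C by rewrite rmorph_nat.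
exact: cReZ.
Qed.
Unset Implicit Arguments.
Set Strict Implicit.
Theorem lemma4p1 (R : realType) (H : lmodType R[i]) (ip : H -> H -> R[i])
    (S : Type) (op : S -> S -> S) (Cs : set H) (T : S -> H -> H)
    (X : set (S -> R[i])) (mu : (S -> R[i]) -> R[i]) (c : H) :
  is_hilbert ip ->
  is_semigroup op ->
  Cs !=set0 ->
  is_representation op Cs T ->
  nonexpansive_rep ip Cs T ->
  Cs c ->
  (exists M : R, forall s : S, hnorm ip (T s c) <= M) ->
  admissible_subspace op X ->
  is_mean X mu ->
  left_invariant op X mu ->
  (forall y : H, X (yc ip T c y)) ->
  [/\ (exists! a : H, is_Tmu ip T mu c a),
      (forall a : H, is_Tmu ip T mu c a -> A_C ip Cs T a)
    & A_C ip Cs T !=set0].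
Proof.
move=> hip hsg hne [Tin Tmul] hnexp Cc [M hM] hX hmu hinv hyc.
set M0 : R := `|M|.
have M00 : 0 <= M0 by rewrite /M0 normr_ge0.
have hM0 : forall s, hnorm ip (T s c) <= M0 := fun s => le_trans (hM s) (ler_norm M).
pose psi y := mu (yc ip T c y).
have ycL : forall (al : R[i]) y z,
    yc ip T c (al *: y + z) = (fun s => conjc al * yc ip T c y s + yc ip T c z s).
  by move=> al y z; apply: funext => s; rewrite /yc (ipDr hip) (ipZr hip).
have psiL : forall (al : R[i]) y z, psi (al *: y + z) = conjc al * psi y + psi z.
  by move=> al y z; rewrite /psi ycL (mu_lin hmu) //.
have psi0 : psi 0 = 0.
  rewrite /psi; have -> : yc ip T c 0 = @cst_fun R S 0.
    apply: funext => s; rewrite /yc /cst_fun (ipsym hip) (ip0l hip).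
    by apply: complex_eqRI => //=; rewrite oppr0.
  exact: (mu_cst0 hX hmu).
have psiZ : forall (al : R[i]) y, psi (al *: y) = conjc al * psi y.
  by move=> al y; have := psiL al y 0; rewrite !addr0 psi0 addr0.
have psiD : forall y z, psi (y + z) = psi y + psi z.
  move=> y z; have := psiL 1 y z; rewrite scale1r => ->.
  by rewrite rmorph1 mul1r.
pose Lf y := complex.Re (psi y).
have LD : forall x y, Lf (x + y) = Lf x + Lf y by move=> x y; rewrite /Lf psiD cReD.
have LZ : forall (r : R) x, Lf (r%:C%C *: x) = r * Lf x.
  by move=> r x; rewrite /Lf psiZ conjc_real' cReZ.
have Lb : forall x, Lf x <= M0 * hnorm ip x.
  move=> x; apply: (mu_pos hX hmu (hyc x)) => s.
  apply: (le_trans (CS hip (T s c) x)).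
  by rewrite ler_wpM2r // hnorm_ge0.
have [a ha] := riesz_real hip M00 LD LZ Lb.
have Tmu_a : is_Tmu ip T mu c a.
  move=> y; apply: complex_eqRI; first exact: ha.
  have := ha ('i%C *: y); rewrite /Pr /Lf (ipZr hip) psiZ conjc_i.
  by rewrite !cRe_iM.
have uniq : forall b, is_Tmu ip T mu c b -> a = b.
  move=> b hb; have h0 : forall y, ip (a - b) y = 0.
    by move=> y; rewrite (ipDl hip) (ipNl hip) Tmu_a hb subrr.
  apply/eqP; rewrite -subr_eq0; apply/eqP.
  by case: hip => _ _ _ def _; apply: def; apply: h0.
have AC : forall b, is_Tmu ip T mu c b -> A_C ip Cs T b.
  move=> b hb x s Cx.
  have hPb : forall y, Pr ip b y = Lf y by move=> y; rewrite /Pr hb.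
  pose g := fun t => 2 * yc ip T c x t + (-2) * ltrans op s (yc ip T c (T s x)) t.
  have Xtr := (let: And5 _ _ _ _ Xt := hX in Xt) s _ (hyc (T s x)).
  have Xg : X g.
    rewrite /g; have -> : (fun t => 2 * yc ip T c x t + (-2) * ltrans op s (yc ip T c (T s x)) t)
      = (fun t => 2 * yc ip T c x t + ((-2) * ltrans op s (yc ip T c (T s x)) t + @cst_fun R S 0 t)).
      by apply: funext => t; rewrite /cst_fun addr0.
    by apply: (Xlin hX) => //; apply: (Xlin hX) => //; case: hX.
  have mug : mu g = 2 * psi x + (-2) * psi (T s x).
    rewrite /g; have -> : (fun t => 2 * yc ip T c x t + (-2) * ltrans op s (yc ip T c (T s x)) t)
      = (fun t => 2 * yc ip T c x t + ((-2) * ltrans op s (yc ip T c (T s x)) t + @cst_fun R S 0 t)).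
      by apply: funext => t; rewrite /cst_fun addr0.
    have Xc0 : X (@cst_fun R S 0) by case: hX.
    rewrite (mu_lin hmu) //; last exact: (Xlin hX).
    by rewrite (mu_lin hmu) // (mu_cst0 hX hmu) addr0 hinv.
  pose e := fun t => Nr ip (T t c).
  have hg : forall t, complex.Re (g t) <= (Nr ip x - Nr ip (T s x)) + e t - e (op s t).
    move=> t; rewrite /g /e /ltrans /yc cReD.
    have -> : (2 : R[i]) = ((2 : R)%:C)%C by rewrite rmorph_nat.
    rewrite mulNr cReN !cReZ (Tmul s t c Cc).
    have Ctc : Cs (T t c) := Tin t c Cc.
    have := hnexp s x (T t c) Cx Ctc.
    rewrite !hnormE ler_sqrt ?(Nr_ge0 hip) // !(NrB hip).
    rewrite -!/(Pr ip _ _) (Prsym hip (T t c) x) (Prsym hip (T s (T t c)) (T s x)).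
    lra.
  have Gb := @Gsum_bound R S op s g _ e hg.
  have GP := Gsum_prop s hX hmu hinv Xg.
  have hn : forall n : nat, n%:R * complex.Re (mu g) <= n%:R * (Nr ip x - Nr ip (T s x)) + M0 ^+ 2.
    move=> n; have [XGn muGn] := GP n; rewrite -Re_natM -muGn.
    apply: (mu_pos hX hmu XGn) => t.
    apply: (le_trans (Gb n t)).
    have h1 : e t <= M0 ^+ 2.
      rewrite /e -(hnorm_sq hip); have := hM0 t; have := hnorm_ge0 ip (T t c); nra.
    have h2 : 0 <= e (iter n (op s) t) by apply: (Nr_ge0 hip).
    set u := e t in h1 *; set v := e (iter n (op s) t) in h2 *. lra.
  have key : complex.Re (mu g) <= Nr ip x - Nr ip (T s x).
    rewrite leNgt; apply/negP => hd.
    set D := complex.Re (mu g) - (Nr ip x - Nr ip (T s x)).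
    have Dp : 0 < D by rewrite /D subr_gt0.
    set n := (Num.trunc (M0 ^+ 2 / D)).+1.
    have hn1 : M0 ^+ 2 / D < n%:R by exact: truncnS_gt.
    have := hn n.
    have : M0 ^+ 2 < n%:R * D by rewrite -ltr_pdivrMr.
    rewrite /D; set N := (n%:R : R). clearbody N. nra.
  move: key; rewrite mug cReD.
  have -> : (2 : R[i]) = ((2 : R)%:C)%C by rewrite rmorph_nat.
  rewrite mulNr cReN !cReZ -/(Lf x) -/(Lf (T s x)) -(hPb x) -(hPb (T s x)).
  move=> key.
  rewrite !hnormE ler_sqrt ?(Nr_ge0 hip) // !(NrB hip).
  lra.
split.
- by exists a; split.
- exact: AC.
- by exists a; apply: AC.
Qed.
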